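(* Let $\mathcal{Z}$ be a finite set of latent values and fix an observation $\mathbf{x}$ and parameters $\theta,\phi$. Let $p_\theta(\mathbf{x},\mathbf{z})\ge 0$ be a joint density with $p_\theta(\mathbf{x})=\sum_{\mathbf{z}\in\mathcal{Z}} p_\theta(\mathbf{x},\mathbf{z})>0$, and let $q_\phi(\mathbf{z}\mid\mathbf{x})$ be a probability distribution on $\mathcal{Z}$ with $q_\phi(\mathbf{z}\mid\mathbf{x})>0$ for all $\mathbf{z}$. For $T\in\mathbb{R}$ let $a_{\theta,\phi}(\mathbf{z}\mid\mathbf{x},T)=\dfrac{e^{T}p_\theta(\mathbf{x},\mathbf{z})}{e^{T}p_\theta(\mathbf{x},\mathbf{z})+q_\phi(\mathbf{z}\mid\mathbf{x})}$, $Z_R(\mathbf{x},T)=\sum_{\mathbf{z}}q_\phi(\mathbf{z}\mid\mathbf{x})a_{\theta,\phi}(\mathbf{z}\mid\mathbf{x},T)$, $r_{\theta,\phi}(\mathbf{z}\mid\mathbf{x},T)=q_\phi(\mathbf{z}\mid\mathbf{x})a_{\theta,\phi}(\mathbf{z}\mid\mathbf{x},T)/Z_R(\mathbf{x},T)$, and $$\text{R-ELBO}(T)=\mathbb{E}_{\mathbf{z}\sim R_{\theta,\phi}(\cdot\mid\mathbf{x},T)}\left[\log\frac{p_\theta(\mathbf{x},\mathbf{z})\,Z_R(\mathbf{x},T)}{q_\phi(\mathbf{z}\mid\mathbf{x})\,a_{\theta,\phi}(\mathbf{z}\mid\mathbf{x},T)}\right]\le \log p_\theta(\mathbf{x}).$$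 Then the R-ELBO gets tighter as $T$ decreases, i.e. $\text{R-ELBO}(T)$ is non-increasing in $T$, but it becomes more expensive to compute: the expected number of proposals $1/Z_R(\mathbf{x},T)$ drawn by the rejection sampler to produce one sample from $R_{\theta,\phi}(\cdot\mid\mathbf{x},T)$ is non-increasing in $T$.
   Context: The rejection sampler for $R_{\theta,\phi}(\cdot\mid\mathbf{x},T)$ repeatedly draws $\mathbf{z}\sim Q_\phi(\cdot\mid\mathbf{x})$ and $u\sim U[0,1]$ independently and outputs $\mathbf{z}$ the first time $u<a_{\theta,\phi}(\mathbf{z}\mid\mathbf{x},T)$; each proposal is accepted with probability $Z_R(\mathbf{x},T)$. *)

(* Defs.v *)
From HB Require Import structures.
From mathcomp Require Import all_boot all_order all_algebra.
From mathcomp Require Import all_classical all_reals all_analysis.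
Set Implicit Arguments. Unset Strict Implicit. Unset Printing Implicit Defensive.
Import Order.TTheory GRing.Theory Num.Theory.
Local Open Scope ring_scope.

(* MathComp + MathComp-Analysis, R : realType.  Latent space Z is a finType.
   p z  := p_theta(x, z)   (x, theta, phi fixed),  q z := q_phi(z | x). *)
Section RELBO.
Variables (R : realType) (Z : finType) (p q : Z -> R).

Definition accept (T : R) (z : Z) : R :=
  expR T * p z / (expR T * p z + q z).

(* normalizer Z_R(x, T) = acceptance probability of a single proposal *)
Definition ZR (T : R) : R := \sum_(z : Z) q z * accept T z.

Definition rdens (T : R) (z : Z) : R := q z * accept T z / ZR T.

Definition RELBO (T : R) : R :=
  \sum_(z : Z) rdens T z * ln (p z * ZR T / (q z * accept T z)).

(* expected number of proposals of the rejection sampler (geometric with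
   success probability Z_R) *)
Definition expected_proposals (T : R) : R := (ZR T)^-1.
End RELBO.

(* Main.v *)
Require Import Defs.
From HB Require Import structures.
From mathcomp Require Import all_boot all_order all_algebra.
From mathcomp Require Import all_classical all_reals all_analysis.
From mathcomp Require Import ring lra.
Import Order.TTheory GRing.Theory Num.Theory.
Local Open Scope ring_scope.

Section H.
Variables (R : realType) (Z : finType) (p q : Z -> R).
Hypothesis hp0 : forall z, 0 <= p z.
Hypothesis hpx : 0 < \sum_(z : Z) p z.
Hypothesis hq0 : forall z, 0 < q z.

Definition al (T : R) z := q z * accept p q T z.

Lemma al_eq T z : al T z = expR T * p z * q z / (expR T * p z + q z).
Proof. rewrite /al /accept; by rewrite mulrA [q z * _]mulrC. Qed.

Lemma den_gt0 T z : 0 < expR T * p z + q z.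
Proof. by apply: ltr_pwDr (hq0 z) _; rewrite mulr_ge0 ?hp0 // ltW ?expR_gt0. Qed.

Lemma al_ge0 T z : 0 <= al T z.
Proof.
rewrite al_eq divr_ge0 ?(ltW (den_gt0 _ _)) // !mulr_ge0 ?hp0 ?(ltW (hq0 _)) //.
Qed.

Lemma al_gt0 T z : 0 < p z -> 0 < al T z.
Proof. move=> h; rewrite al_eq divr_gt0 ?den_gt0 // !mulr_gt0 ?hq0 ?expR_gt0 //. Qed.

Lemma al_0 T z : p z = 0 -> al T z = 0.
Proof. by move=> h; rewrite al_eq h !(mulr0, mul0r). Qed.

Lemma p_cases z : p z = 0 \/ 0 < p z.
Proof. have := hp0 z; rewrite le_eqVlt => /orP [/eqP ->|]; auto. Qed.

Lemma ex_pos : exists z, 0 < p z.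
Proof.
case: (pselect (exists z, 0 < p z)) => // H; exfalso.
suff : \sum_(z : Z) p z = 0 by move=> h; move: hpx; rewrite h ltxx.
apply: big1 => z _; case: (p_cases z) => // h; exfalso; apply: H; by exists z.
Qed.

Lemma ZR_eq T : ZR p q T = \sum_z al T z.
Proof. by []. Qed.

Lemma ZR_gt0 T : 0 < ZR p q T.
Proof.
have [z0 hz0] := ex_pos.
rewrite ZR_eq (bigD1 z0) //=; apply: ltr_pwDl; first exact: al_gt0.
by apply: sumr_ge0 => z _; apply: al_ge0.
Qed.

Lemma al_mono Ta Tb z : Ta <= Tb -> al Ta z <= al Tb z.
Proof.
move=> hT; have hc : expR Ta <= expR Tb by rewrite ler_expR.
rewrite !al_eq -subr_ge0.
have hp := hp0 z; have hq := hq0 z.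
have da := den_gt0 Ta z; have db := den_gt0 Tb z.
set a := expR Ta in hc da *; set b := expR Tb in hc db *.
have -> : b * p z * q z / (b * p z + q z) - a * p z * q z / (a * p z + q z)
   = (b - a) * (p z * q z * q z) / ((a * p z + q z) * (b * p z + q z)).
  by field; rewrite ?gt_eqF.
apply: divr_ge0; first apply: mulr_ge0; [by rewrite subr_ge0 | by rewrite !mulr_ge0 // ltW | by rewrite ltW // mulr_gt0].
Qed.

Lemma sym_sum (K : Z -> Z -> R) (g : Z -> R) :
  (forall z y, K y z = - K z y) -> (forall z y, 0 <= K z y * (g z - g y)) ->
  0 <= \sum_z (\sum_y K z y) * g z.
Proof.
move=> hK hpos.
have E : \sum_z (\sum_y K z y) * g z = \sum_z \sum_y K z y * g z.
  by apply: eq_bigr => z _; rewrite mulr_suml.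
have E2 : \sum_z \sum_y K z y * g y = - \sum_z \sum_y K z y * g z.
  rewrite exchange_big /= -sumrN; apply: eq_bigr => y _.
  rewrite -sumrN; apply: eq_bigr => z _; by rewrite (hK y z) mulNr.
have H : 0 <= \sum_z \sum_y K z y * (g z - g y).
  by apply: sumr_ge0 => z _; apply: sumr_ge0 => y _.
have E3 : \sum_z \sum_y K z y * (g z - g y)
   = \sum_z \sum_y K z y * g z - \sum_z \sum_y K z y * g y.
  rewrite -sumrB; apply: eq_bigr => z _; rewrite -sumrB.
  by apply: eq_bigr => y _; rewrite mulrBr.
rewrite E; move: H; rewrite E3 E2; lra.
Qed.

Lemma rdens_eq T z : rdens p q T z = al T z / ZR p q T.
Proof. by []. Qed.

Lemma sum_rdens T : \sum_z rdens p q T z = 1.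
Proof. by rewrite -mulr_suml -ZR_eq divff // gt_eqF // ZR_gt0. Qed.

Lemma RELBO_eq T : RELBO p q T = \sum_z rdens p q T z * ln (p z / rdens p q T z).
Proof.
rewrite /RELBO. apply eq_bigr => z _.
by rewrite /rdens invf_div (mulrA (p z)).
Qed.

Lemma rdens_0 T z : p z = 0 -> rdens p q T z = 0.
Proof. by move=> h; rewrite rdens_eq al_0 // mul0r. Qed.

Lemma rdens_gt0 T z : 0 < p z -> 0 < rdens p q T z.
Proof. by move=> h; rewrite rdens_eq divr_gt0 ?al_gt0 ?ZR_gt0. Qed.

Definition L (c : R) z := ln (p z / q z + c^-1).

Definition al' (c : R) z := c * p z * q z / (c * p z + q z).

Lemma pair_ge0 ca cb z y : 0 < cb -> cb <= ca ->
  0 <= (al' cb z * al' ca y - al' ca z * al' cb y) * (L cb z - L cb y).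
Proof.
move=> hcb hc.
have hca : 0 < ca by apply: lt_le_trans hc.
have pz := hp0 z; have qz := hq0 z; have py := hp0 y; have qy := hq0 y.
have d1 : 0 < ca * p z + q z by apply: ltr_pwDr => //; rewrite mulr_ge0 // ltW.
have d2 : 0 < cb * p z + q z by apply: ltr_pwDr => //; rewrite mulr_ge0 // ltW.
have d3 : 0 < ca * p y + q y by apply: ltr_pwDr => //; rewrite mulr_ge0 // ltW.
have d4 : 0 < cb * p y + q y by apply: ltr_pwDr => //; rewrite mulr_ge0 // ltW.
set d := p z * q y - p y * q z.
have EK : al' cb z * al' ca y - al' ca z * al' cb y =
  (ca * cb * (p z * q z * p y * q y) * (ca - cb)) * d /
  ((ca * p z + q z) * (cb * p z + q z) * (ca * p y + q y) * (cb * p y + q y)).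
  by rewrite /al' /d; field; rewrite ?gt_eqF.
have M0 : 0 <= ca * cb * (p z * q z * p y * q y) * (ca - cb).
  by rewrite !mulr_ge0 ?subr_ge0 // ltW.
have D0 : 0 < (ca * p z + q z) * (cb * p z + q z) * (ca * p y + q y) * (cb * p y + q y).
  by rewrite !mulr_gt0.
have Ed : p z / q z - p y / q y = d / (q z * q y).
  by rewrite /d; field; rewrite ?gt_eqF.
have hpos : forall w, 0 < p w / q w + cb^-1.
  move=> w; have := hp0 w; have := hq0 w => h1 h2.
  have : 0 <= p w / q w by rewrite divr_ge0 // ltW.
  have : 0 < cb^-1 by rewrite invr_gt0.
  lra.
rewrite EK; case/orP: (le_total 0 d) => hd.
- apply: mulr_ge0; first by apply: divr_ge0; [exact: mulr_ge0 | exact: ltW].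
  rewrite subr_ge0 /L ler_ln ?posrE ?hpos // lerD2r -subr_ge0 Ed.
  by rewrite divr_ge0 // ltW // mulr_gt0.
- apply: mulr_le0. rewrite -mulrA; apply: mulr_ge0_le0 M0 _; apply: mulr_le0_ge0 hd _; by rewrite invr_ge0 ltW.
  rewrite subr_le0 /L ler_ln ?posrE ?hpos // lerD2r -subr_le0 Ed.
  apply: mulr_le0_ge0 hd _; by rewrite invr_ge0 ltW // mulr_gt0.
Qed.


Lemma alg_id (a b lp la lb : R) :
  b * (lp - lb) - a * (lp - la) = a * (la - lb) + (b - a) * (lp - lb).
Proof. ring. Qed.

Lemma relbo_mono T1 T2 : T1 <= T2 -> RELBO p q T2 <= RELBO p q T1.
Proof.
move=> hT; rewrite !RELBO_eq -subr_ge0.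
set ra := rdens p q T2; set rb := rdens p q T1.
set Na := ZR p q T2; set Nb := ZR p q T1.
have hNa : 0 < Na := ZR_gt0 T2. have hNb : 0 < Nb := ZR_gt0 T1.
set ca := expR T2; set cb := expR T1.
have hcb : 0 < cb := expR_gt0 T1.
have hc : cb <= ca by rewrite ler_expR.
have Sa : \sum_z ra z = 1 := sum_rdens T2.
have Sb : \sum_z rb z = 1 := sum_rdens T1.
have E1 : \sum_z rb z * ln (p z / rb z) - \sum_z ra z * ln (p z / ra z)
   = \sum_z ra z * ln (ra z / rb z) + \sum_z (rb z - ra z) * (ln Nb + L cb z).
  rewrite -sumrB -big_split /=; apply: eq_bigr => z _.
  case: (p_cases z) => hz.
    by rewrite /ra /rb !rdens_0 // !(mul0r, subrr, addr0).
  have ha := rdens_gt0 T2 z hz; have hb := rdens_gt0 T1 z hz.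
  have -> : p z / rb z = Nb * (p z / q z + cb^-1).
    rewrite /rb rdens_eq al_eq -/Nb -/cb.
    have := den_gt0 T1 z; rewrite -/cb => hd.
    have := hq0 z => hq.
    by field; rewrite ?gt_eqF.
  rewrite /L lnM ?posrE //; last first.
    have : 0 <= p z / q z by rewrite divr_ge0 // ltW.
    have : 0 < cb^-1 by rewrite invr_gt0.
    lra.
  rewrite -lnM ?posrE //; last first.
    have : 0 <= p z / q z by rewrite divr_ge0 // ltW.
    have : 0 < cb^-1 by rewrite invr_gt0.
    lra.
  have -> : Nb * (p z / q z + cb^-1) = p z / rb z.
    rewrite /rb rdens_eq al_eq -/Nb -/cb.
    have := den_gt0 T1 z; rewrite -/cb => hd.
    have := hq0 z => hq.
    by field; rewrite ?gt_eqF.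
  have h1 : ln (p z / rb z) = ln (p z) - ln (rb z) by rewrite ln_div ?posrE.
  have h2 : ln (p z / ra z) = ln (p z) - ln (ra z) by rewrite ln_div ?posrE.
  have h3 : ln (ra z / rb z) = ln (ra z) - ln (rb z) by rewrite ln_div ?posrE.
  rewrite h1 h2 h3; apply: alg_id.
rewrite E1; apply: addr_ge0.
  have G : forall z, ra z - rb z <= ra z * ln (ra z / rb z).
    move=> z; case: (p_cases z) => hz.
      by rewrite /ra /rb !rdens_0 // !(mul0r, subrr, addr0, lexx).
    have ha := rdens_gt0 T2 z hz; have hb := rdens_gt0 T1 z hz.
    have hl : ln (rb z / ra z) <= rb z / ra z - 1.
      have := @le_ln1Dx R (rb z / ra z - 1).
      rewrite [1 + _]addrC subrK; apply.
      have : 0 < rb z / ra z by rewrite divr_gt0.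
      lra.
    have hr : 0 < rb z / ra z by rewrite divr_gt0.
    rewrite -invf_div lnV ?posrE //.
    have -> : ra z - rb z = ra z * (- (rb z / ra z - 1)).
      by field; rewrite gt_eqF.
    by apply: ler_wpM2l; [exact: ltW | rewrite lerN2].
  apply: le_trans (ler_sum _ (fun z _ => G z)).
  by rewrite sumrB Sa Sb subrr.
have E2 : \sum_z (rb z - ra z) * (ln Nb + L cb z)
   = \sum_z (rb z - ra z) * L cb z.
  under eq_bigr do rewrite mulrDr.
  by rewrite big_split /= -mulr_suml sumrB Sa Sb subrr mul0r add0r.
rewrite E2.
have E3 : \sum_z (rb z - ra z) * L cb z =
  (\sum_z (\sum_y (al' cb z * al' ca y - al' ca z * al' cb y)) * L cb z) / (Na * Nb).
  rewrite mulr_suml; apply: eq_bigr => z _.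
  rewrite sumrB -mulr_sumr -mulr_sumr.
  have -> : \sum_y al' ca y = Na.
    by rewrite /Na ZR_eq; apply: eq_bigr => y _; rewrite al_eq.
  have -> : \sum_y al' cb y = Nb.
    by rewrite /Nb ZR_eq; apply: eq_bigr => y _; rewrite al_eq.
  rewrite /ra /rb !rdens_eq !al_eq -/Na -/Nb -/ca -/cb -/(al' ca z) -/(al' cb z).
  by field; rewrite ?gt_eqF.
rewrite E3; apply: divr_ge0; last by rewrite ltW // mulr_gt0.
apply: sym_sum => [z y|z y]; first by ring.
exact: pair_ge0.
Qed.

Lemma ep_mono T1 T2 : T1 <= T2 -> expected_proposals p q T2 <= expected_proposals p q T1.
Proof.
move=> hT; rewrite /expected_proposals lef_pV2 ?posrE ?ZR_gt0 //.
rewrite !ZR_eq; apply: ler_sum => z _; exact: al_mono.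
Qed.
End H.

Theorem corollary1 (R : realType) (Z : finType) (p q : Z -> R)
  (hp0 : forall z, 0 <= p z)
  (hpx : 0 < \sum_(z : Z) p z)
  (hq0 : forall z, 0 < q z)
  (hq1 : \sum_(z : Z) q z = 1) :
  (forall T1 T2 : R, T1 <= T2 -> RELBO p q T2 <= RELBO p q T1) /\
  (forall T1 T2 : R, T1 <= T2 ->
     expected_proposals p q T2 <= expected_proposals p q T1).
Proof.
split=> T1 T2 hT; [exact: relbo_mono | exact: ep_mono].
Qed.
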